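(* For integers $1\le k\le n$, let $h_{k|n}(p)=\sum_{i=k}^{n}\binom{n}{i}p^i(1-p)^{n-i}$, $p\in[0,1]$, be the reliability function of a $k$-out-of-$n$ system with i.i.d. components each of reliability $p$, and let $H_{k|n}(p)=p\,h_{k|n}'(p)/h_{k|n}(p)$ for $p\in(0,1)$. Then: (ii) for integers $1\le k\le n$ and $1\le l\le m$ with $k\le l$ and $m-l\le n-k$, the ratio $H_{k|n}(p)/H_{l|m}(p)$ is decreasing in $p\in(0,1)$; (iii) for $1\le k\le n$, the function $(1-p)\,H_{k|n}'(p)/H_{k|n}(p)$ is decreasing in $p\in(0,1)$.
   Context: ''Increasing'' means non-decreasing and ''decreasing'' means non-increasing. A $k$-out-of-$n$ system functions as long as at least $k$ of its $n$ components function. (Part (i) of this lemma in the paper, that $H_{k|n}$ is decreasing, is a cited result and is not included.) *)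

(* Defs.v *)
From HB Require Import structures.
From mathcomp Require Import all_boot all_order all_algebra.
From mathcomp Require Import all_classical all_reals all_analysis.
Set Implicit Arguments. Unset Strict Implicit. Unset Printing Implicit Defensive.
Import Order.TTheory GRing.Theory Num.Theory.
Local Open Scope ring_scope.

Definition relk {R : realType} (k n : nat) (p : R) : R :=
  \sum_(k <= i < n.+1) ('C(n, i))%:R * p ^+ i * (1 - p) ^+ (n - i).

Definition Hk {R : realType} (k n : nat) (p : R) : R :=
  p * derive1 (relk k n) p / relk k n p.

(* "decreasing" = non-increasing on the open interval (0,1). *)
Definition decreasing_on01 {R : realType} (f : R -> R) : Prop :=
  forall p q : R, 0 < p -> p <= q -> q < 1 -> f q <= f p.

(* Main.v *)
Require Import Defs.
From HB Require Import structures.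
From mathcomp Require Import all_boot all_order all_algebra.
From mathcomp Require Import all_classical all_reals all_analysis.
From mathcomp Require Import ring lra zify.
Import Order.TTheory GRing.Theory Num.Theory.
Local Open Scope ring_scope.

Lemma step_gen (X Y X1 Y1 p q r s : nat) : (0 < p)%N -> (0 < q)%N ->
  (p * X1 = r * X)%N -> (q * Y1 = s * Y)%N -> (r * q <= p * s)%N -> (X1 * Y <= X * Y1)%N.
Proof.
move=> p0 q0 h1 h2 h3.
have pq : (0 < p * q)%N by rewrite muln_gt0 p0 q0.
rewrite -(leq_pmul2r pq).
have -> : (X1 * Y * (p * q) = (p * X1) * (q * Y))%N by lia.
have -> : (X * Y1 * (p * q) = X * p * (q * Y1))%N by lia.
rewrite h1 h2.
have -> : (r * X * (q * Y) = (X * Y) * (r * q))%N by lia.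
have -> : (X * p * (s * Y) = (X * Y) * (p * s))%N by lia.
exact: leq_mul.
Qed.
Section Ratio.
Variable R : realType.

Lemma chain_ratio (a b : nat -> R) N :
  (forall j, (j < N)%N -> 0 < b j) ->
  (forall j, (j.+1 < N)%N -> a j.+1 * b j <= a j * b j.+1) ->
  forall i d, (i + d < N)%N -> a (i + d)%N * b i <= a i * b (i + d)%N.
Proof.
move=> bpos st i; elim=> [|d IH] hd.
  by rewrite addn0.
have hd' : (i + d < N)%N by lia.
have bi := bpos i ltac:(lia).
have bd := bpos (i + d)%N hd'.
have bd1 := bpos (i + d.+1)%N hd.
have s1 := st (i + d)%N ltac:(lia).
rewrite addnS in bd1 *.
have IH' := IH hd'.
have : a (i + d).+1 * b (i + d) * b i <= a i * b (i + d).+1 * b (i + d).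
  apply: (le_trans (y := a (i + d) * b (i + d).+1 * b i)).
    by rewrite ler_wpM2r // ltW.
  rewrite -mulrA [b (i+d).+1 * b i]mulrC mulrA.
  rewrite [X in _ <= X]mulrAC.
  by rewrite ler_wpM2r // ltW.
rewrite mulrAC ler_pM2r //.
Qed.

Lemma pow_cross (s t : R) i j : 0 <= s -> s <= t -> (i <= j)%N ->
  t ^+ i * s ^+ j <= s ^+ i * t ^+ j.
Proof.
move=> s0 st ij.
have [d ->] : exists d, j = (i + d)%N by exists (j - i)%N; lia.
rewrite !exprD.
have -> : t ^+ i * (s ^+ i * s ^+ d) = (s ^+ i * t ^+ i) * s ^+ d by ring.
have -> : s ^+ i * (t ^+ i * t ^+ d) = (s ^+ i * t ^+ i) * t ^+ d by ring.
apply: ler_wpM2l; first by rewrite mulr_ge0 // exprn_ge0 // (le_trans s0).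
by rewrite lerXn2r // nnegrE (le_trans s0).
Qed.

Lemma ratio_mono (a b : nat -> R) N (s t : R) :
  (0 < N)%N ->
  (forall j, (j < N)%N -> 0 < b j) ->
  (forall j, (j.+1 < N)%N -> a j.+1 * b j <= a j * b j.+1) ->
  0 < s -> s <= t ->
  (\sum_(j < N) a j * t ^+ j) / (\sum_(j < N) b j * t ^+ j) <=
  (\sum_(j < N) a j * s ^+ j) / (\sum_(j < N) b j * s ^+ j).
Proof.
move=> N0 bpos st s0 le_st.
have t0 : 0 < t by apply: lt_le_trans le_st.
have Bpos : forall u : R, 0 < u -> 0 < \sum_(j < N) b j * u ^+ j.
  move=> u u0; have [N' eN] : exists N', N = N'.+1 by exists N.-1; lia.
  rewrite eN big_ord_recl /=; apply: ltr_wpDr.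
    apply: sumr_ge0 => i _; apply: mulr_ge0; last by rewrite exprn_ge0 // ltW.
    by apply/ltW/bpos; rewrite eN /= ltnS.
  by rewrite expr0 mulr1 bpos // eN.
rewrite ler_pdivrMr ?Bpos // mulrAC ler_pdivlMr ?Bpos //.
rewrite -subr_ge0.
set D := (X in 0 <= X).
have -> : D = \sum_(i < N) \sum_(j < N) (a i * b j * (s ^+ i * t ^+ j - t ^+ i * s ^+ j)).
  rewrite /D !mulr_suml -sumrB; apply: eq_bigr => i _.
  rewrite !mulr_sumr -sumrB; apply: eq_bigr => j _; ring.
set T := fun i j : 'I_N => a i * b j * (s ^+ i * t ^+ j - t ^+ i * s ^+ j).
have -> : \sum_(i < N) \sum_(j < N) T i j =
   (\sum_(i < N) \sum_(j < N) (T i j + T j i)) / 2.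
  rewrite [X in _ = X / _](_ : _ = (\sum_(i < N) \sum_(j < N) T i j) *+ 2).
    by rewrite -mulr_natr mulfK // pnatr_eq0.
  rewrite mulr2n; under eq_bigr do rewrite big_split /=.
  by rewrite big_split /= [X in _ + X]exchange_big.
apply: divr_ge0 => //; apply: sumr_ge0 => i _; apply: sumr_ge0 => j _.
have -> : T i j + T j i = (a i * b j - a j * b i) * (s ^+ i * t ^+ j - t ^+ i * s ^+ j).
  rewrite /T; ring.
have key : forall i j : 'I_N, (i <= j)%N -> 0 <= a i * b j - a j * b i.
  move=> i0 j0 ij; rewrite subr_ge0.
  have := @chain_ratio a b N bpos st i0 (j0 - i0)%N.
  rewrite subnKC // => /(_ (ltn_ord j0)).
  by rewrite mulrC [X in _ <= X]mulrC.
case: (leqP i j) => ij.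
  apply: mulr_ge0; first exact: key.
  by rewrite subr_ge0 pow_cross // ltW.
have ji : (j <= i)%N by apply: ltnW.
rewrite -mulrNN; apply: mulr_ge0.
  by rewrite opprB; apply: key.
by rewrite opprB subr_ge0 mulrC [X in _ <= X]mulrC pow_cross // ltW.
Qed.
End Ratio.
Section Rep.
Variable R : realType.

Definition PS (n k N : nat) (t : R) := \sum_(j < N) ('C(n, k + j))%:R * t ^+ j.

Lemma relk_rep k n N (x : R) : (k <= n)%N -> (n - k < N)%N -> x != 1 ->
  relk k n x = (1 - x) ^+ n * (x / (1 - x)) ^+ k * PS n k N (x / (1 - x)).
Proof.
move=> kn nkN x1.
have x1' : 1 - x != 0 by rewrite subr_eq0 eq_sym.
rewrite /relk /PS mulr_sumr.
rewrite [LHS](_ : _ = \sum_(k <= i < k + N) ('C(n, i))%:R * x ^+ i * (1 - x) ^+ (n - i)); last first.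
  rewrite [RHS](big_cat_nat (n := n.+1)) /=; [|lia|lia].
  rewrite [X in _ = _ + X]big1_seq ?addr0 //.
  move=> i /andP [_]; rewrite mem_index_iota => /andP [hi _].
  by rewrite bin_small // !mul0r.
rewrite -{1}(add0n k) big_addn addKn big_mkord.
apply: eq_bigr => i _.
case: (leqP (i + k) n) => hik; last first.
  by rewrite (addnC k i) bin_small // !(mul0r, mulr0).
have [r er] : exists r, n = (i + k + r)%N by exists (n - (i + k))%N; lia.
rewrite er addKn (addnC k i) !exprD !expr_div_n.
field; rewrite ?expf_neq0 //.
Qed.
End Rep.
Section Der.
Variable R : realType.

Definition Prel k n : {poly R} :=
  \sum_(k <= i < n.+1) ('C(n, i))%:R *: ('X^i * (1 - 'X) ^+ (n - i)).

Lemma relkE k n : relk k n = horner (Prel k n).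
Proof.
apply/funext => x; rewrite /relk /Prel horner_sum; apply: eq_bigr => i _.
by rewrite !hornerE.
Qed.

Lemma dterm n i (x : R) : (('C(n, i))%:R *: ('X^i * (1 - 'X) ^+ (n - i)))^`().[x] =
  ('C(n, i))%:R * (i%:R * x ^+ i.-1 * (1 - x) ^+ (n - i)
     - (n - i)%:R * x ^+ i * (1 - x) ^+ (n - i).-1).
Proof.
rewrite derivZ derivM derivXn deriv_exp derivB derivX -polyC1 derivC.
rewrite !(hornerMn, hornerE) /=.
rewrite -[_ *+ i]mulr_natl -[_ *+ (n - i)]mulr_natl.
move: (x ^+ i.-1) (x ^+ i) ((1-x) ^+ (n - i)) ((1-x) ^+ (n - i).-1) (i%:R : R) ((n - i)%:R : R) ('C(n, i)%:R : R).
move=> a b c d e f g; ring.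
Qed.

End Der.
Arguments PS {R}.
Arguments Prel {R}.
Section D2.
Variable R : realType.
Lemma drelk K n (x : R) : (K < n)%N ->
  derive1 (relk K.+1 n) x = (n * 'C(n.-1, K))%:R * x ^+ K * (1 - x) ^+ (n - K.+1).
Proof.
move=> Kn.
rewrite relkE -derivE /Prel raddf_sum horner_sum.
under eq_bigr do rewrite dterm.
pose g := fun j : nat => (n * 'C(n.-1, j))%:R * x ^+ j * (1 - x) ^+ (n.-1 - j) : R.
rewrite (@telescope_sumr_eq _ _ _ (fun i => - g i.-1)); last first.
  move=> i /andP [h1 h2].
  have [j ej] : exists j, i = j.+1 by exists i.-1; lia.
  have [r er] : exists r, n = (j.+1 + r)%N by exists (n - j.+1)%N; lia.
  subst i.
  have e1 : (n - j.+1 = r)%N by lia.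
  have e2 : (n.-1 - j = r)%N by lia.
  have e3 : (n.-1 - j.+1 = r.-1)%N by lia.
  have e4 : (n * 'C(n.-1, j) = j.+1 * 'C(n, j.+1))%N by rewrite mul_bin_diag.
  have e5 : (n * 'C(n.-1, j.+1) = r * 'C(n, j.+1))%N by rewrite mul_bin_down e1.
  rewrite /g /= e1 e2 e3 e4 e5 !natrM.
  move: (x ^+ j) (x ^+ j.+1) ((1-x) ^+ r) ((1-x) ^+ r.-1) (j.+1%:R : R) (r%:R : R) ('C(n, j.+1)%:R : R).
  move=> a b c d e f h; ring.
  by lia.
rewrite /g /= bin_small; last by lia.
have -> : (n.-1 - K = n - K.+1)%N by lia.
by rewrite muln0 !mul0r oppr0 sub0r opprK.
Qed.

End D2.

Section Main.
Variable R : realType.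

Lemma PS_gt0 n k N (t : R) : (k <= n)%N -> (0 < N)%N -> 0 < t -> 0 < PS n k N t.
Proof.
move=> kn N0 t0; have [N' eN] : exists N', N = N'.+1 by exists N.-1; lia.
rewrite /PS eN big_ord_recl /=; apply: ltr_wpDr.
  apply: sumr_ge0 => i _; apply: mulr_ge0; last by rewrite exprn_ge0 // ltW.
  by rewrite ler0n.
by rewrite expr0 mulr1 addn0 ltr0n bin_gt0.
Qed.

Lemma HkE k n N (x : R) : (0 < k)%N -> (k <= n)%N -> (n - k < N)%N -> 0 < x < 1 ->
  Hk k n x = (k * 'C(n, k))%:R / PS n k N (x / (1 - x)).
Proof.
case: k => [//|K] _ kn nkN /andP [x0 x1].
have x1' : x != 1 by rewrite lt_eqF.
have y0 : 0 < 1 - x by rewrite subr_gt0.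
have t0 : 0 < x / (1 - x) by rewrite divr_gt0.
have P0 := @PS_gt0 n K.+1 N _ kn ltac:(lia) t0.
rewrite /Hk drelk // (@relk_rep _ K.+1 n N) // -mul_bin_diag.
have [r er] : exists r, n = (K.+1 + r)%N by exists (n - K.+1)%N; lia.
have -> : (n - K.+1 = r)%N by lia.
rewrite [in (1 - x) ^+ n]er exprD expr_div_n.
move: P0; move: (PS n K.+1 N (x / (1 - x))) => P P0.
rewrite !exprS.
have hxK : x ^+ K != 0 by rewrite expf_neq0 // gt_eqF.
have hyK : (1 - x) ^+ K != 0 by rewrite expf_neq0 // gt_eqF.
have hyr : (1 - x) ^+ r != 0 by rewrite expf_neq0 // gt_eqF.
move: hxK hyK hyr; move: (x ^+ K) ((1 - x) ^+ K) ((1 - x) ^+ r) => a b c ha hb hc.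
have hx : x != 0 by rewrite gt_eqF.
have hy : 1 - x != 0 by rewrite gt_eqF.
have hP : P != 0 by rewrite gt_eqF.
move: hy; move: (1 - x) => y hy.
by field; rewrite ?ha ?hb ?hc ?hx ?hy ?hP.
Qed.

Lemma t_mono (p q : R) : 0 < p -> p <= q -> q < 1 -> p / (1 - p) <= q / (1 - q).
Proof.
move=> p0 pq q1.
have hp : 0 < 1 - p by rewrite subr_gt0 (le_lt_trans pq).
have hq : 0 < 1 - q by rewrite subr_gt0.
rewrite ler_pdivrMr // mulrAC ler_pdivlMr //.
nra.
Qed.

Lemma part2 k n l m : (1 <= k <= n)%N -> (1 <= l <= m)%N -> (k <= l)%N ->
  (m - l <= n - k)%N -> decreasing_on01 (fun p : R => Hk k n p / Hk l m p).
Proof.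
move=> /andP[k0 kn] /andP[l0 lm] kl mlnk p q p0 pq q1.
pose N := (n - k).+1.
have hx : forall x : R, 0 < x < 1 -> Hk k n x / Hk l m x =
   ((k * 'C(n, k))%:R / (l * 'C(m, l))%:R) * (PS m l N (x / (1 - x)) / PS n k N (x / (1 - x))).
  move=> x /andP [x0 x1].
  have t0 : 0 < x / (1 - x) by rewrite divr_gt0 // subr_gt0.
  have hx01 : 0 < x < 1 by rewrite x0 x1.
  rewrite (@HkE k n N x k0 kn _ hx01); last by rewrite /N; lia.
  rewrite (@HkE l m N x l0 lm _ hx01); last by rewrite /N; lia.
  have P1 := @PS_gt0 n k N _ kn ltac:(lia) t0.
  have P2 := @PS_gt0 m l N _ lm ltac:(lia) t0.
  have c2 : 'C(m, l)%:R != 0 :> R by rewrite pnatr_eq0 -lt0n bin_gt0.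
  have c3 : l%:R != 0 :> R by rewrite pnatr_eq0 -lt0n.
  by field; rewrite c2 c3 !gt_eqF.
have ltp1 : p < 1 by apply: le_lt_trans q1.
rewrite !hx ?p0 ?ltp1 ?q1 ?(lt_le_trans p0 pq) //.
apply: ler_wpM2l; first by rewrite divr_ge0 // ler0n.
have := @ratio_mono R (fun j => ('C(m, (l + j)%N))%:R) (fun j => ('C(n, (k + j)%N))%:R) N
   (p / (1 - p)) (q / (1 - q)).
apply => //.
- by move=> j jN; rewrite ltr0n bin_gt0; rewrite /N in jN; lia.
- move=> j jN; rewrite /N in jN; rewrite -!natrM ler_nat.
  apply: (@step_gen _ _ _ _ (l + j).+1 (k + j).+1 (m - (l + j)) (n - (k + j))) => //.
  + by rewrite addnS mul_bin_left.
  + by rewrite addnS mul_bin_left.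
  + rewrite mulnC; apply: leq_mul; lia.
- by rewrite divr_gt0 // subr_gt0.
- exact: t_mono.
Qed.

End Main.
Section Main2.
Variable R : realType.

Definition Gp K n : {poly R} :=
  ((n * 'C(n.-1, K))%:R)%:P * 'X^(K.+1) * (1 - 'X) ^+ (n - K.+1).

Lemma Dhorner (p : {poly R}) x : 'D_1 (horner p) x = p^`().[x].
Proof. by rewrite -derive1E -derivE. Qed.

Lemma Hk_pt K n y : (K < n)%N ->
  Hk K.+1 n y = (Gp K n).[y] * ((Prel K.+1 n).[y])^-1.
Proof.
move=> Kn; rewrite /Hk drelk // relkE.
have -> : (Gp K n).[y] = (n * 'C(n.-1, K))%:R * (y * y ^+ K) * (1 - y) ^+ (n - K.+1).
  rewrite /Gp !(hornerM, hornerC, hornerXn, horner_exp, hornerD, hornerN, hornerX) -?polyC1 ?hornerC exprS; ring.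
move: ((Prel K.+1 n).[y]) => P.
rewrite /=; ring.
Qed.

Lemma Hk_fun K n : (K < n)%N ->
  Hk K.+1 n = (horner (Gp K n)) * (fun y => (horner (Prel K.+1 n) y)^-1).
Proof.
by move=> Kn; apply/funext => y; rewrite Hk_pt.
Qed.

Lemma dHk K n (x : R) : (K < n)%N -> (Prel K.+1 n).[x] != 0 ->
  derive1 (Hk K.+1 n) x = (Gp K n).[x] * (- ((Prel K.+1 n).[x])^-2 * (Prel K.+1 n)^`().[x])
     + ((Prel K.+1 n).[x])^-1 * (Gp K n)^`().[x].
Proof.
move=> Kn P0.
have dG : derivable (horner (Gp K n)) x 1 by exact: derivable_horner.
have dP : derivable (horner (Prel K.+1 n)) x 1 by exact: derivable_horner.
have dV : derivable (fun y => (horner (Prel K.+1 n) y)^-1) x 1.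
  exact: derivableV.
rewrite (Hk_fun K n Kn) derive1E (deriveM dG dV) (deriveV P0 dP) !Dhorner /=.
reflexivity.
Qed.


Lemma dGp K n (x : R) : (Gp K n)^`().[x] = (n * 'C(n.-1, K))%:R *
  (K.+1%:R * x ^+ K * (1 - x) ^+ (n - K.+1) - (n - K.+1)%:R * x ^+ K.+1 * (1 - x) ^+ (n - K.+1).-1).
Proof.
rewrite /Gp -mulrA derivM derivC mul0r add0r derivM derivXn deriv_exp derivB derivX -polyC1 derivC.
rewrite !(hornerMn, hornerE) /= -[_ *+ K.+1]mulr_natl -[_ *+ (n - K.+1)]mulr_natl.
move: (x ^+ K) (x ^+ K.+1) ((1-x) ^+ (n - K.+1)) ((1-x) ^+ (n - K.+1).-1) (K.+1%:R : R) ((n - K.+1)%:R : R).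
move=> a b c d e f; ring.
Qed.

Lemma PS_split n K m (t : R) : (n <= K.+1 + m)%N ->
  PS n K.+1 m.+1 t = ('C(n, K.+1))%:R + t * PS n K.+2 m.+1 t.
Proof.
move=> h; rewrite /PS big_ord_recl /= addn0 expr0 mulr1; congr (_ + _).
rewrite big_ord_recr /= bin_small; last by lia.
rewrite mul0r addr0 mulr_sumr; apply: eq_bigr => j _.
by rewrite /bump /= add1n addnS exprS; ring.
Qed.

Lemma GpE K n (x : R) : (Gp K n).[x] = (n * 'C(n.-1, K))%:R * (x * x ^+ K) * (1 - x) ^+ (n - K.+1).
Proof.
by rewrite /Gp !(hornerM, hornerC, hornerXn, horner_exp, hornerD, hornerN, hornerX) -?polyC1 ?hornerC exprS; ring.
Qed.

Lemma FE K n (x : R) : (K < n)%N -> 0 < x < 1 ->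
  (1 - x) * derive1 (Hk K.+1 n) x / Hk K.+1 n x =
  K.+1%:R * (PS n K.+2 (n - K.+1).+1 (x / (1 - x)) / PS n K.+1 (n - K.+1).+1 (x / (1 - x)))
  - (n - K.+1)%:R.
Proof.
move=> Kn /andP [x0 x1].
have x1' : x != 1 by rewrite lt_eqF.
have y0 : 0 < 1 - x by rewrite subr_gt0.
have t0 : 0 < x / (1 - x) by rewrite divr_gt0.
have [m em] : exists m, n = (K.+1 + m)%N by exists (n - K.+1)%N; lia.
have nm : (n - K.+1 = m)%N by lia.
have P0 := @PS_gt0 R n K.+1 m.+1 _ ltac:(lia) ltac:(lia) t0.
have Prep : (Prel K.+1 n).[x] = (1 - x) ^+ n * (x / (1 - x)) ^+ K.+1 * PS n K.+1 m.+1 (x / (1 - x)).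
  by rewrite -relkE (@relk_rep _ K.+1 n m.+1) //; lia.
have Pn0 : (Prel K.+1 n).[x] != 0.
  by rewrite Prep !mulf_neq0 ?expf_neq0 ?gt_eqF.
have dP : (Prel K.+1 n)^`().[x] = (n * 'C(n.-1, K))%:R * x ^+ K * (1 - x) ^+ (n - K.+1).
  by rewrite -(@drelk R K n x Kn) relkE -derivE.
rewrite dHk // dP dGp (Hk_pt K n x Kn) GpE Prep.
have bC : (n * 'C(n.-1, K))%:R = K.+1%:R * ('C(n, K.+1))%:R :> R by rewrite -natrM mul_bin_diag.
rewrite bC nm.
have b0 : 0 < ('C(n, K.+1))%:R :> R by rewrite ltr0n bin_gt0; lia.
move: P0; rewrite PS_split; last by lia.
rewrite [in (1 - x) ^+ n]em !exprD expr_div_n.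
move: (PS n K.+2 m.+1 (x / (1 - x))) => Q.
move: b0; move: ('C(n, K.+1))%:R => b b0 P0.
rewrite !(exprS x) !(exprS (1 - x)).
have hK : K.+1%:R != 0 :> R by rewrite pnatr_eq0.
have ha : x ^+ K != 0 by rewrite expf_neq0 // gt_eqF.
have hc : (1 - x) ^+ K != 0 by rewrite expf_neq0 // gt_eqF.
have hx : x != 0 by rewrite gt_eqF.
have hb : b != 0 by rewrite gt_eqF.
have hP : b + x / (1 - x) * Q != 0 by rewrite gt_eqF.
move: hP; move: hc; move: (x ^+ K) ((1 - x) ^+ K) ha => a c ha hc hP.
destruct m as [|m'].
  rewrite mul0r !expr0 subr0 !mulr1.
  move: hP y0; move: (1 - x) => y hP y0.
  have hy : y != 0 by rewrite gt_eqF.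
  have hP' : b * y + x * Q != 0.
    have -> : b * y + x * Q = y * (b + x / y * Q) by field.
    by rewrite mulf_neq0.
  have hK' : 1 + K%:R != 0 :> R by rewrite nat1r pnatr_eq0.
  by field; rewrite hK' ha hc hx hb hP' hy.
have hd : (1 - x) ^+ m' != 0 by rewrite expf_neq0 // gt_eqF.
rewrite succnK !(exprS (1 - x)).
move: hd; move: ((1 - x) ^+ m') => d hd.
move: hP y0; move: (1 - x) => y hP y0.
have hy : y != 0 by rewrite gt_eqF.
have hP' : b * y + x * Q != 0.
  have -> : b * y + x * Q = y * (b + x / y * Q) by field.
  by rewrite mulf_neq0.
have hK' : 1 + K%:R != 0 :> R by rewrite nat1r pnatr_eq0.
by field; rewrite hK' ha hc hx hb hP' hy hd.
Qed.

End Main2.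

Lemma part3 (R : realType) k n : (1 <= k <= n)%N ->
  decreasing_on01 (fun p : R => (1 - p) * derive1 (Hk k n) p / Hk k n p).
Proof.
case: k => [//|K] /andP [_ Kn] p q p0 pq q1.
have p1 : p < 1 by apply: le_lt_trans q1.
have q0 : 0 < q by apply: lt_le_trans pq.
rewrite /= (@FE R K n p Kn); last by rewrite p0 p1.
rewrite (@FE R K n q Kn); last by rewrite q0 q1.
rewrite lerD2r; apply: ler_wpM2l; first by rewrite ler0n.
pose N := (n - K.+1).+1.
have := @ratio_mono R (fun j => ('C(n, (K.+2 + j)%N))%:R) (fun j => ('C(n, (K.+1 + j)%N))%:R) N
   (p / (1 - p)) (q / (1 - q)).
apply => //.
- by move=> j jN; rewrite ltr0n bin_gt0; rewrite /N in jN; lia.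
- move=> j jN; rewrite /N in jN; rewrite -!natrM ler_nat.
  apply: (@step_gen _ _ _ _ (K.+2 + j).+1 (K.+1 + j).+1 (n - (K.+2 + j)) (n - (K.+1 + j))) => //.
  + by rewrite addnS mul_bin_left.
  + by rewrite addnS mul_bin_left.
  + rewrite mulnC; apply: leq_mul; lia.
- by rewrite divr_gt0 // subr_gt0.
- exact: t_mono.
Qed.

Theorem lemma2p3 (R : realType) :
  (* (ii) *)
  (forall k n l m : nat,
      (1 <= k <= n)%N -> (1 <= l <= m)%N -> (k <= l)%N -> (m - l <= n - k)%N ->
      decreasing_on01 (fun p : R => Hk k n p / Hk l m p)) /\
  (* (iii) *)
  (forall k n : nat, (1 <= k <= n)%N ->
      decreasing_on01 (fun p : R => (1 - p) * derive1 (Hk k n) p / Hk k n p)).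
Proof.
split.
- move=> k n l m; exact: part2.
- move=> k n; exact: part3.
Qed.
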